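(* Let $L\ge 18$ be even. Then \[ M_S(L,3)\le\begin{cases}\lfloor (L+4)/8\rfloor & \text{if } L\equiv 0 \pmod{12},\\ \lfloor (L+2)/8\rfloor & \text{if } L\equiv 4,6,8 \pmod{12},\\ \lfloor L/8\rfloor & \text{if } L\equiv 2,10 \pmod{12}.\end{cases} \]
   Context: $\mathcal{P}(L,\omega)$ is the set of $\omega$-element subsets of $\mathbb{Z}_L$. For $\mathcal{I}\in\mathcal{P}(L,\omega)$: $d(\mathcal{I})=\{a-b \bmod L: a,b\in\mathcal{I}\}$, $d^*(\mathcal{I})=d(\mathcal{I})\setminus\{0\}$. A strongly conflict-avoiding code (SCAC) of length $L$ and weight $\omega$ is a set $\mathcal{C}=\{\mathcal{I}_1,\dots,\mathcal{I}_M\}\subseteq\mathcal{P}(L,\omega)$ such that for all $j\ne k$, $\big(d^*(\mathcal{I}_j)\cup(d^*(\mathcal{I}_j)+1)\cup(d^*(\mathcal{I}_j)-1)\big)\cap d(\mathcal{I}_k)=\emptyset$ (shifts mod $L$). $M_S(L,\omega)$ denotes the maximum number of codewords in an SCAC of length $L$ and weight $\omega$. *)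

(* Defs.v *)
From mathcomp Require Import all_boot.
Set Implicit Arguments. Unset Strict Implicit. Unset Printing Implicit Defensive.

(* Z_L is represented by 'I_L (residues 0..L-1); arithmetic is done mod L on nat. *)

Definition dset (L : nat) (I : {set 'I_L}) (x : nat) : bool :=
  [exists a in I, exists b in I, x == (a + L - b) %% L].

Definition dstar (L : nat) (I : {set 'I_L}) (x : nat) : bool :=
  (x != 0) && dset I x.

Definition sc_compatible (L : nat) (Ij Ik : {set 'I_L}) : bool :=
  [forall x : 'I_L, dstar Ij x ==>
     [&& ~~ dset Ik x, ~~ dset Ik ((x + 1) %% L) & ~~ dset Ik ((x + L - 1) %% L)]].

Definition is_SCAC (L w : nat) (C : {set {set 'I_L}}) : Prop :=
  (forall I, I \in C -> #|I| = w) /\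
  (forall Ij Ik, Ij \in C -> Ik \in C -> Ij != Ik -> sc_compatible Ij Ik).

Definition scac3_bound (L : nat) : nat :=
  if L %% 12 == 0 then (L + 4) %/ 8
  else if (L %% 12 == 4) || (L %% 12 == 6) || (L %% 12 == 8) then (L + 2) %/ 8
  else L %/ 8.

(* Main.v *)
Require Import Defs.
From mathcomp Require Import all_boot.
From mathcomp Require Import zify.
Set Implicit Arguments. Unset Strict Implicit. Unset Printing Implicit Defensive.

Definition inD6 a b c x := [|| x == a, x == b, x == c, x == a+b, x == b+c | x == a+c].
Definition inD a b c x := (x == 0) || inD6 a b c x.
Definition inE3 a b c x := inD6 a b c x || ((0 < x) && inD6 a b c x.-1).
Definition Eset L (I : {set 'I_L}) : {set 'I_L} :=
  [set x : 'I_L | dstar I x || dstar I ((x + L - 1) %% L)].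

Lemma modsub L u v : u < L -> v < L ->
  (u + L - v) %% L = if v <= u then u - v else u + L - v.
Proof.
move=> uL vL; case: leqP => h.
  have -> : u + L - v = (u - v) + L by lia.
  rewrite modnDr modn_small //; lia.
rewrite modn_small //; lia.
Qed.

Lemma dset3 L (p q r : 'I_L) x : p < q -> q < r -> x < L ->
  dset [set p; q; r] x = inD (q - p) (r - q) (L - r + p) x.
Proof.
move=> pq qr xL; have pL := ltn_ord p; have qL := ltn_ord q; have rL := ltn_ord r.
rewrite /dset; apply/existsP/idP.
  case=> u /andP[]; rewrite !inE => /orP[/orP[/eqP->|/eqP->]|/eqP->] /existsP[v /andP[]];
  rewrite !inE => /orP[/orP[/eqP->|/eqP->]|/eqP->] /eqP->; rewrite modsub //; case: leqP => ?;
  rewrite /inD /inD6; lia.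
have W : forall u v : 'I_L, u \in [set p;q;r] -> v \in [set p;q;r] ->
   x = (u + L - v) %% L ->
   exists u0, (u0 \in [set p;q;r]) && [exists b in [set p;q;r], x == (u0 + L - b) %% L].
  move=> u v Hu Hv Hx; exists u; rewrite Hu /=; apply/existsP; exists v.
  by rewrite Hv Hx eqxx.
rewrite /inD => /orP[/eqP Hx|/orP[/eqP Hx|/orP[/eqP Hx|/orP[/eqP Hx|/orP[/eqP Hx|/orP[/eqP Hx|/eqP Hx]]]]]].
- by apply: (W p p); rewrite ?inE ?eqxx ?orbT // modsub //; case: leqP => ?; lia.
- by apply: (W q p); rewrite ?inE ?eqxx ?orbT // modsub //; case: leqP => ?; lia.
- by apply: (W r q); rewrite ?inE ?eqxx ?orbT // modsub //; case: leqP => ?; lia.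
- by apply: (W p r); rewrite ?inE ?eqxx ?orbT // modsub //; case: leqP => ?; lia.
- by apply: (W r p); rewrite ?inE ?eqxx ?orbT // modsub //; case: leqP => ?; lia.
- by apply: (W p q); rewrite ?inE ?eqxx ?orbT // modsub //; case: leqP => ?; lia.
- by apply: (W q r); rewrite ?inE ?eqxx ?orbT // modsub //; case: leqP => ?; lia.
Qed.


Lemma dstar_simp a b c z : inD6 a b c 0 = false ->
  (z != 0) && inD a b c z = inD6 a b c z.
Proof. by move=> h; rewrite /inD; case: (z =P 0) => [->|] //=; rewrite h. Qed.

Lemma Eset3 L (p q r : 'I_L) (x : 'I_L) : p < q -> q < r ->
  2 <= q - p -> 2 <= r - q -> 2 <= L - r + p ->
  (x \in Eset [set p;q;r]) = inE3 (q - p) (r - q) (L - r + p) x.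
Proof.
move=> pq qr ha hb hc; have xL := ltn_ord x; have rL := ltn_ord r.
have L0 : 0 < L by lia.
have h0 : inD6 (q - p) (r - q) (L - r + p) 0 = false by rewrite /inD6; lia.
rewrite inE /dstar !dset3 ?ltn_pmod // !dstar_simp // /inE3.
case: (posnP x) => [x0|xpos].
  rewrite x0 add0n modn_small; last lia.
  have -> : inD6 (q - p) (r - q) (L - r + p) (L - 1) = false by rewrite /inD6; lia.
  by rewrite h0.
have -> : (x + L - 1) %% L = x.-1.
  have -> : x + L - 1 = (x.-1) + L by lia.
  rewrite modnDr modn_small //; lia.
by [].
Qed.

Definition fv L (A : {set 'I_L}) : nat :=
  (if 3 %| L then 4 else 2) * [exists x in A, val x == L %/ 3] +
  2 * ((4 %| L) && [exists x in A, val x == L %/ 4]).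

Lemma card_list L (A : {set 'I_L}) (P : nat -> bool) s :
  (forall x : 'I_L, (x \in A) = P x) -> uniq s -> all (fun x => x < L) s ->
  all P s -> size s <= #|A|.
Proof.
move=> HA us sL sP.
have <- : size (pmap insub s : seq 'I_L) = size s.
  by rewrite size_pmap_sub; apply/eqP; rewrite -all_count.
rewrite cardE; apply: uniq_leq_size; first exact: pmap_sub_uniq.
move=> y; rewrite mem_pmap_sub mem_enum HA => ys; exact: (allP sP).
Qed.

Lemma exin L (A : {set 'I_L}) (P : nat -> bool) k :
  (forall x : 'I_L, (x \in A) = P x) -> k < L -> P k -> [exists x in A, val x == k].
Proof. by move=> HA kL Pk; apply/existsP; exists (Ordinal kL); rewrite HA Pk eqxx. Qed.

Lemma fv3 L (A : {set 'I_L}) : [exists x in A, val x == L %/ 3] ->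
  (if 3 %| L then 4 else 2) <= fv A.
Proof. by move=> h; rewrite /fv h muln1 leq_addr. Qed.

Lemma fv4 L (A : {set 'I_L}) : 4 %| L -> [exists x in A, val x == L %/ 4] -> 2 <= fv A.
Proof. by move=> h4 h; rewrite /fv h h4 muln1 leq_addl. Qed.

Ltac por := match goal with
 | |- is_true (_ || _) => apply/orP; first [ left; por | right; por ]
 | |- is_true (_ && _) => apply/andP; split; por
 | |- is_true (_ == _) => apply/eqP; lia
 | |- _ => lia end.
Ltac splitall := repeat match goal with |- is_true (_ && _) => apply/andP; split end.
Ltac uq := rewrite /= !inE !negb_or; splitall; lia.
Ltac lt := rewrite /=; splitall; lia.
Ltac inl := rewrite /= /inE3 /inD6 /=; splitall; por.

Lemma core L a b c (A : {set 'I_L}) : (forall x : 'I_L, (x \in A) = inE3 a b c x) ->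
  2 <= a -> a <= b -> b <= c -> a + b + c = L -> ~~ odd L -> 18 <= L -> 8 <= #|A| + fv A.
Proof.
move=> HA ha hab hbc hL hodd h18.
have hev := odd_double_half L; rewrite (negbTE hodd) add0n in hev.
have C : forall s, uniq s -> all (fun x => x < L) s -> all (inE3 a b c) s ->
  size s <= #|A| := fun s => card_list HA.
case: (leqP (a+2) b) => h1.
  apply: leq_trans (leq_addr (fv A) _).
  apply: (C [:: a; a.+1; b; b.+1; a+c; (a+c).+1; b+c; (b+c).+1]); [uq|lt|inl].
have hb : b = a \/ b = a.+1 by lia.
case: (leqP (b+2) c) => h2.
  case: hb => hb.
    case: (eqVneq c (a + a)) => hc.
      have e : L %/ 4 = a by lia.
      have := @fv4 L A (ltac:(apply/dvdnP; exists a; lia))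
        (exin HA (ltac:(lia) : L %/ 4 < L) (ltac:(rewrite e /inE3 /inD6; por))).
      have : 6 <= #|A|.
        by apply: (C [:: a; a.+1; c; c.+1; a+c; (a+c).+1]); [uq|lt|inl].
      lia.
    have hc' : c != (a + a).+1 /\ c.+1 != a + a.
      split; apply/negP => /eqP hh; move: hev; lia.
    apply: leq_trans (leq_addr (fv A) _).
    by apply: (C [:: a; a.+1; c; c.+1; a+a; (a+a).+1; a+c; (a+c).+1]); [uq|lt|inl].
  apply: leq_trans (leq_addr (fv A) _).
  by apply: (C [:: a; a.+1; a.+2; c; c.+1; a+c; (a+c).+1; (a+c).+2]); [uq|lt|inl].
have hc : c = b \/ c = b.+1 by lia.
case: hb => hb; case: hc => hc.
- have e : L %/ 3 = a by lia.
  have := @fv3 L A (exin HA (ltac:(lia) : L %/ 3 < L) (ltac:(rewrite e /inE3 /inD6; por))).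
  have -> : 3 %| L by apply/dvdnP; exists a; lia.
  have : 4 <= #|A|.
    by apply: (C [:: a; a.+1; a+a; (a+a).+1]); [uq|lt|inl].
  lia.
- have e : L %/ 3 = a by lia.
  have := @fv3 L A (exin HA (ltac:(lia) : L %/ 3 < L) (ltac:(rewrite e /inE3 /inD6; por))).
  have : 6 <= #|A|.
    by apply: (C [:: a; a.+1; a.+2; a+a; (a+a).+1; (a+a).+2]); [uq|lt|inl].
  case: ifP; lia.
- have e : L %/ 3 = a by lia.
  have := @fv3 L A (exin HA (ltac:(lia) : L %/ 3 < L) (ltac:(rewrite e /inE3 /inD6; por))).
  have : 6 <= #|A|.
    by apply: (C [:: a; a.+1; a.+2; (a+a).+1; (a+a).+2; (a+a).+3]); [uq|lt|inl].
  case: ifP; lia.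
- apply: leq_trans (leq_addr (fv A) _).
  by apply: (C [:: a; a.+1; a.+2; a.+3; (a+a).+1; (a+a).+2; (a+a).+3; (a+a).+4]); [uq|lt|inl].
Qed.

Lemma inD6_swap1 a b c x : inD6 a b c x = inD6 b a c x.
Proof. by rewrite /inD6 (addnC b a); case: (x == a); case: (x == b); case: (x == c);
  case: (x == a + b); case: (x == b + c); case: (x == a + c). Qed.
Lemma inD6_swap2 a b c x : inD6 a b c x = inD6 a c b x.
Proof. by rewrite /inD6 (addnC c b); case: (x == a); case: (x == b); case: (x == c);
  case: (x == a + b); case: (x == b + c); case: (x == a + c). Qed.
Lemma inE3_swap1 a b c x : inE3 a b c x = inE3 b a c x.
Proof. by rewrite /inE3 !(inD6_swap1 a b c). Qed.
Lemma inE3_swap2 a b c x : inE3 a b c x = inE3 a c b x.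
Proof. by rewrite /inE3 !(inD6_swap2 a b c). Qed.

Lemma core_gen L a b c (A : {set 'I_L}) : (forall x : 'I_L, (x \in A) = inE3 a b c x) ->
  2 <= a -> 2 <= b -> 2 <= c -> a + b + c = L -> ~~ odd L -> 18 <= L -> 8 <= #|A| + fv A.
Proof.
move=> HA ha hb hc hL hodd h18.
have [h1|h1] := leqP a b; have [h2|h2] := leqP b c; have [h3|h3] := leqP a c.
- exact: (@core L a b c).
- lia.
- apply: (@core L a c b) => //; try lia. by move=> x; rewrite HA inE3_swap2.
- apply: (@core L c a b) => //; try lia. by move=> x; rewrite HA inE3_swap2 inE3_swap1.
- apply: (@core L b a c) => //; try lia. by move=> x; rewrite HA inE3_swap1.
- apply: (@core L b c a) => //; try lia. by move=> x; rewrite HA inE3_swap1 inE3_swap2.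
- lia.
- apply: (@core L c b a) => //; try lia.
  by move=> x; rewrite HA inE3_swap2 inE3_swap1 inE3_swap2.
Qed.

Lemma sort3 L (x y z : 'I_L) : x != y -> y != z -> z != x ->
  exists p q r : 'I_L, [/\ p < q, q < r & [set x; y; z] = [set p; q; r]].
Proof.
move=> nxy nyz nzx.
have nxy' : (x : nat) != y := nxy.
have nyz' : (y : nat) != z := nyz.
have nzx' : (z : nat) != x := nzx.
have E : forall p q r : 'I_L, [set x; y; z] = [set p; q; r] ->
  p < q -> q < r -> exists p q r : 'I_L, [/\ p < q, q < r & [set x; y; z] = [set p; q; r]].
  by move=> p q r e pq qr; exists p, q, r.
have [h1|h1] : x < y \/ y < x by lia.
all: have [h2|h2] : y < z \/ z < y by lia.
all: have [h3|h3] : x < z \/ z < x by lia.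
all: first [ lia | apply: (E x y z); [|lia|lia] | apply: (E x z y); [|lia|lia]
   | apply: (E y x z); [|lia|lia] | apply: (E y z x); [|lia|lia]
   | apply: (E z x y); [|lia|lia] | apply: (E z y x); [|lia|lia] ].
all: apply/setP=> w; rewrite !inE; by case: (w == x); case: (w == y); case: (w == z).
Qed.

Lemma codeword L (I : {set 'I_L}) : 18 <= L -> ~~ odd L -> #|I| = 3 ->
  dstar I 1 = false -> 8 <= #|Eset I| + fv (Eset I).
Proof.
move=> h18 hodd h3 h1.
have : 2 < #|I| by rewrite h3.
case/card_gt2P => x [y [z [[xI yI zI] [nxy nyz nzx]]]].
have eI : I = [set x; y; z].
  apply/eqP; rewrite eq_sym eqEcard; apply/andP; split.
    by apply/subsetP => w; rewrite !inE => /orP[/orP[/eqP->|/eqP->]|/eqP->].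
  rewrite h3; apply/card_gt2P; exists x, y, z; rewrite !inE !eqxx !orbT /=.
  by split.
rewrite eI in h1 *.
case: (sort3 nxy nyz nzx) => p [q [r [pq qr e]]]; rewrite e in h1 *.
have rL := ltn_ord r.
rewrite /dstar dset3 // in h1; last lia.
move: h1; rewrite /inD /inD6 /= => /negbT/norP[h1a /norP[h1b /norP[h1c _]]].
apply: (@core_gen L (q - p) (r - q) (L - r + p)); try lia.
move=> w; apply: Eset3; lia.
Qed.

Lemma card_sumb (T : finType) (A : {set T}) : #|A| = \sum_x (x \in A).
Proof. by rewrite -sum1_card big_mkcond /=; apply: eq_bigr => x _; case: (x \in A). Qed.

Lemma sum_ge2 n : \sum_(i < n) (2 <= i) = n - 2.
Proof.
elim: n => [|n IH]; first by rewrite big_ord0.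
rewrite big_ord_recr /= IH; case: (leqP 2 n) => h /=; lia.
Qed.

Lemma exin_ord L (A : {set 'I_L}) k (kL : k < L) :
  [exists x in A, val x == k] = (Ordinal kL \in A).
Proof.
apply/existsP/idP => [[x /andP[xA /eqP e]]|h].
  by have -> : Ordinal kL = x by apply: val_inj.
by exists (Ordinal kL); rewrite h eqxx.
Qed.

Theorem mainTheorem6 (L : nat) (hL : 18 <= L) (hev : ~~ odd L)
  (C : {set {set 'I_L}}) (hC : is_SCAC 3 C) :
  #|C| <= scac3_bound L.
Proof.
case: hC => h3 hcomp.
have L0 : 0 < L by lia.
case: (leqP #|C| 1) => hC1.
  by apply: leq_trans hC1 _; rewrite /scac3_bound; case: ifP => _; [|case: ifP => _]; lia.
have other : forall I, I \in C -> exists J, (J \in C) && (J != I).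
  move=> I IC; case/card_gt1P: hC1 => u [v [uC vC uv]].
  case: (eqVneq u I) => [e|ne].
    by exists v; rewrite vC -e eq_sym.
  by exists u; rewrite uC.
have dset0 : forall J, J \in C -> dset J 0.
  move=> J /h3 hJ; have : 0 < #|J| by rewrite hJ.
  case/card_gt0P => u uJ; apply/existsP; exists u; rewrite uJ /=; apply/existsP; exists u.
  by rewrite uJ /= (_ : u + L - u = L) ?modnn //; lia.
have no1 : forall I, I \in C -> dstar I 1 = false.
  move=> I IC; case: (other I IC) => J /andP[JC JI].
  have := hcomp I J IC JC (ltac:(by rewrite eq_sym)).
  have L1 : 1 < L by lia.
  move/forallP/(_ (Ordinal L1))/implyP => H.
  case hd: (dstar I 1) => //; move: (H hd) => /and3P[_ _] /=.
  by rewrite (_ : 1 + L - 1 = L) ?modnn ?dset0 //; lia.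
have noLm1 : forall I, I \in C -> dstar I (L - 1) = false.
  move=> I IC; case: (other I IC) => J /andP[JC JI].
  have := hcomp I J IC JC (ltac:(by rewrite eq_sym)).
  have Lm : L - 1 < L by lia.
  move/forallP/(_ (Ordinal Lm))/implyP => H.
  case hd: (dstar I (L - 1)) => //; move: (H hd) => /and3P[_ + _] /=.
  by rewrite (_ : L - 1 + 1 = L) ?modnn ?dset0 //; lia.
have disj : forall I J (x : 'I_L), I \in C -> J \in C -> I != J ->
    x \in Eset I -> x \in Eset J -> False.
  move=> I J x IC JC IJ; rewrite !inE.
  have cIJ := hcomp I J IC JC IJ.
  have cJI := hcomp J I JC IC (ltac:(by rewrite eq_sym)).
  have yL : (x + L - 1) %% L < L by rewrite ltn_pmod.
  move: cIJ cJI => /forallP cIJ /forallP cJI.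
  case/orP => hI; case/orP => hJ.
  - move: (cIJ x) => /implyP/(_ hI)/and3P[/negP + _ _]; apply.
    by case/andP: hJ.
  - by move: (cIJ x) => /implyP/(_ hI)/and3P[_ _ /negP]; apply; case/andP: hJ.
  - by move: (cJI x) => /implyP/(_ hJ)/and3P[_ _ /negP]; apply; case/andP: hI.
  - move: (cIJ (Ordinal yL)) => /implyP/(_ hI)/and3P[/negP + _ _]; apply.
    by case/andP: hJ.
have lo : forall I (x : 'I_L), I \in C -> x \in Eset I -> 2 <= x.
  move=> I x IC; rewrite inE; case: (ltnP x 2) => // hx.
  have [e|e] : x = 0 :> nat \/ x = 1 :> nat by lia.
    rewrite e add0n modn_small; last lia.
    by rewrite (noLm1 I IC) orbF /dstar eqxx.
  rewrite e (no1 I IC) (_ : 1 + L - 1 = L) ?modnn; last lia.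
  by rewrite /dstar eqxx.
have pw : forall x : 'I_L, \sum_(I in C) (x \in Eset I) <= (2 <= x).
  move=> x; case: (boolP [exists I in C, x \in Eset I]).
    case/existsP => I0 /andP[I0C xI0].
    rewrite (bigD1 I0) //= xI0 big1 ?addn0 ?(lo I0 x) //.
    move=> J /andP[JC JI]; case: (boolP (x \in Eset J)) => // xJ.
    by case: (disj J I0 x JC I0C JI xJ xI0).
  move=> hn; rewrite big1 //.
  move=> I IC; case: (boolP (x \in Eset I)) => // xI.
  by case/negP: hn; apply/existsP; exists I; rewrite IC.
have S1 : \sum_(I in C) #|Eset I| <= L - 2.
  rewrite (eq_bigr _ (fun I _ => card_sumb (Eset I))) exchange_big /=.
  rewrite -sum_ge2; apply: leq_sum => x _; exact: pw.
have k3 : L %/ 3 < L by lia.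
have k4 : L %/ 4 < L by lia.
have S2 : \sum_(I in C) fv (Eset I) <=
    (if 3 %| L then 4 else 2) * 1 + 2 * (4 %| L).
  rewrite /fv big_split /= -!big_distrr /=; apply: leq_add.
    rewrite leq_mul2l; apply/orP; right.
    rewrite (eq_bigr (fun I => (Ordinal k3 \in Eset I) : nat)); last first.
      by move=> I _; rewrite exin_ord.
    exact: leq_trans (pw (Ordinal k3)) (leq_b1 _).
  rewrite leq_mul2l; apply/orP; right.
  case h4: (4 %| L) => /=; last by rewrite big1.
  rewrite (eq_bigr (fun I => (Ordinal k4 \in Eset I) : nat)); last first.
    by move=> I _; rewrite exin_ord.
  exact: leq_trans (pw (Ordinal k4)) (leq_b1 _).
have S3 : #|C| * 8 <= \sum_(I in C) (#|Eset I| + fv (Eset I)).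
  rewrite -sum_nat_const; apply: leq_sum => I IC.
  exact: codeword hL hev (h3 I IC) (no1 I IC).
rewrite big_split /= in S3.
have key := leq_trans S3 (leq_add S1 S2).
move: key; rewrite /scac3_bound.
case h4: (4 %| L); case: ifP => h3d /=; case: ifP => ha; try case: ifP => hb; lia.
Qed.
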